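(* Let $0<x_L<\mu<x_H<1$ and let $F$ be the distribution over posteriors supported on $\{x_L,x_H\}$ with mean $\mu$. Define $$\eta_1(x_H)=-\mu c'(\mu)-c(x_H)+c'(x_H)x_H,\qquad \eta_2(x_L)=(1-\mu)c'(\mu)-c(x_L)-(1-x_L)c'(x_L),$$ and $\eta(x_L,x_H)=\max\{\eta_1(x_H),\eta_2(x_L)\}$. Then the principal can implement $F$ efficiently if and only if $v_0/\kappa\ge\eta(x_L,x_H)$.
   Context: There are two states $\Theta=\{\theta_1,\theta_2\}$; a belief is identified with $x\in[0,1]$, the probability of $\theta_2$; the prior is $\mu\in(0,1)$. Bayes-plausible distributions over posteriors are probability measures on $[0,1]$ with mean $\mu$. Acquiring $F$ costs the agent $\kappa\int c\,dF$, where $\kappa>0$ and $c:[0,1]\to\mathbb{R}_+$ is strictly convex, twice continuously differentiable, bounded on $(0,1)$, with $c(\mu)=0$. The agent is risk neutral and protected by limited liability: a contract $(M,t)$ is a compact message set $M$ and a transfer $t:M\times\Theta\to\mathbb{R}_+$ paid in money. The agent has outside option $v_0\ge0$. Timing: the principal offers $(M,t)$; the agent rejects (getting $v_0$) or accepts, chooses any Bayes-plausible $G$ paying $\kappa\int c\,dG$, privately observes a posterior $x\sim G$, then walks away (getting $v_0$) or sends $d\in M$ and receives $t(d,\theta)$ in realized state $\theta$. For $d\in M$, $N(x\mid d)=(1-x)t(d,\theta_1)+x\,t(d,\theta_2)-\kappa c(x)$. $(M,t)$ implements $F$ if $M=\operatorname{supp}(F)$ and ''accept, acquire $F$, send the realized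 posterior as message'' is optimal among all agent strategies (rejecting; or accepting, acquiring any $G$, and at each posterior sending any possibly randomized message or walking away). The principal's cost is the expected transfer. $F$ is implemented efficiently if it is implemented at expected transfer equal to the first-best cost $\kappa\int c\,dF+v_0$. *)

(* Defs.v *)
From HB Require Import structures.
From mathcomp Require Import all_boot all_order all_algebra.
From mathcomp Require Import all_classical all_reals all_analysis.
Set Implicit Arguments. Unset Strict Implicit. Unset Printing Implicit Defensive.
Import Order.TTheory GRing.Theory Num.Theory.
Import numFieldNormedType.Exports.
Local Open Scope classical_set_scope.
Local Open Scope ring_scope.

Inductive state := th1 | th2.

Section Model.
Variable R : realType.

Definition unit_itv : set R := [set x | 0 <= x <= 1].

(* Standing assumptions on the cost function c : [0,1] -> R_+ (only its values
   on [0,1] matter; it is given as a total function on R). *)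
Definition cost_assumptions (c : R -> R) (mu : R) : Prop :=
  (forall x, 0 <= x <= 1 -> 0 <= c x) /\
  (forall x y l, 0 <= x <= 1 -> 0 <= y <= 1 -> x != y -> 0 < l < 1 ->
      c (l * x + (1 - l) * y) < l * c x + (1 - l) * c y) /\
  (forall x, 0 < x < 1 ->
      derivable c x 1 /\ derivable (derive1 c) x 1 /\ {for x, continuous (derive1n 2 c)}) /\
  (exists B : R, forall x, 0 < x < 1 -> c x <= B) /\
  c mu = 0.

(* Bayes-plausible distributions over posteriors: probability measures on
   [0,1] (here: on R, giving full mass to [0,1]) with mean mu. *)
Definition bayes_plausible (G : probability R R) (mu : R) : Prop :=
  G unit_itv = 1%E /\ (\int[G]_(x in unit_itv) x%:E = mu%:E)%E.

(* Expected transfer for message d at posterior x (the transfer part of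
   N(x | d)). *)
Definition exp_transfer (t : R -> state -> R) (d x : R) : R :=
  (1 - x) * t d th1 + x * t d th2.

(* Weights of the two-point distribution F on {xL, xH} with mean mu. *)
Definition wL (xL xH mu : R) : R := (xH - mu) / (xH - xL).
Definition wH (xL xH mu : R) : R := (mu - xL) / (xH - xL).

(* A (behavioural, possibly randomized) reporting strategy with message set
   M = {xL, xH}: at posterior x, walk away with probability pW x, send xL with
   probability pL x, send xH with probability pH x. *)
Definition strategy (pW pL pH : R -> R) : Prop :=
  measurable_fun unit_itv pW /\ measurable_fun unit_itv pL /\
  measurable_fun unit_itv pH /\
  (forall x, 0 <= x <= 1 ->
     [/\ 0 <= pW x, 0 <= pL x, 0 <= pH x & pW x + pL x + pH x = 1]).

Definition dev_payoff (c : R -> R) (kappa v0 xL xH : R) (t : R -> state -> R)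
    (G : probability R R) (pW pL pH : R -> R) : \bar R :=
  (\int[G]_(x in unit_itv)
      (pW x * v0 + pL x * exp_transfer t xL x + pH x * exp_transfer t xH x)%:E
   - kappa%:E * \int[G]_(x in unit_itv) (c x)%:E)%E.

Definition truthful_payoff (c : R -> R) (kappa xL xH mu : R)
    (t : R -> state -> R) : R :=
  wL xL xH mu * (exp_transfer t xL xL - kappa * c xL) +
  wH xL xH mu * (exp_transfer t xH xH - kappa * c xH).

Definition principal_cost (xL xH mu : R) (t : R -> state -> R) : R :=
  wL xL xH mu * exp_transfer t xL xL + wH xL xH mu * exp_transfer t xH xH.

Definition first_best (c : R -> R) (kappa v0 xL xH mu : R) : R :=
  kappa * (wL xL xH mu * c xL + wH xL xH mu * c xH) + v0.

(* The contract (M, t) with M = supp F = {xL, xH} and limited-liability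
   transfers t : M x Theta -> R_+ implements F. *)
Definition implements (c : R -> R) (kappa v0 xL xH mu : R)
    (t : R -> state -> R) : Prop :=
  (forall d s, (d = xL \/ d = xH) -> 0 <= t d s) /\
  v0 <= truthful_payoff c kappa xL xH mu t /\
  (forall (G : probability R R) pW pL pH,
     bayes_plausible G mu -> strategy pW pL pH ->
     (dev_payoff c kappa v0 xL xH t G pW pL pH
        <= (truthful_payoff c kappa xL xH mu t)%:E)%E).

Definition implements_efficiently (c : R -> R) (kappa v0 xL xH mu : R) : Prop :=
  exists t : R -> state -> R,
    implements c kappa v0 xL xH mu t /\
    principal_cost xL xH mu t = first_best c kappa v0 xL xH mu.

Definition eta1 (c : R -> R) (mu xH : R) : R :=
  - mu * derive1 c mu - c xH + derive1 c xH * xH.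
Definition eta2 (c : R -> R) (mu xL : R) : R :=
  (1 - mu) * derive1 c mu - c xL - (1 - xL) * derive1 c xL.
Definition eta_max (c : R -> R) (mu xL xH : R) : R :=
  Num.max (eta1 c mu xH) (eta2 c mu xL).

End Model.

(* Main.v *)
Require Import Defs.
From HB Require Import structures.
From mathcomp Require Import all_boot all_order all_algebra.
From mathcomp Require Import all_classical all_reals all_analysis.
From mathcomp Require Import ring lra measurable_realfun.
Import Order.TTheory GRing.Theory Num.Theory.
Import numFieldNormedType.Exports.
Local Open Scope classical_set_scope.
Local Open Scope ring_scope.

Section helpers.
Variable R : realType.
Implicit Types (c : R -> R).

Definition sconvex c := forall x y l, 0 <= x <= 1 -> 0 <= y <= 1 -> x != y -> 0 < l < 1 ->
      c (l * x + (1 - l) * y) < l * c x + (1 - l) * c y.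

Lemma chord_le c a x h : sconvex c -> 0 <= a <= 1 -> 0 <= x <= 1 -> a < x ->
  0 < h <= x - a -> c (h + a) - c a <= h / (x - a) * (c x - c a).
Proof.
move=> cv ha hx ax /andP[h0 hxa].
have xa0 : 0 < x - a by rewrite subr_gt0.
have [->|hne] := eqVneq h (x - a).
  by rewrite divff ?gt_eqF // mul1r subrK.
have l01 : 0 < h / (x - a) < 1.
  by apply/andP; split; [exact: divr_gt0| rewrite ltr_pdivrMr // mul1r lt_neqAle hne hxa].
have := cv x a _ hx ha (negbT (gt_eqF ax)) l01.
have -> : h / (x - a) * x + (1 - h / (x - a)) * a = h + a.
  by field; rewrite gt_eqF.
move=> /ltW H; move: H; set l := h / (x - a); lra.
Qed.

Lemma chord_ge c a x h : sconvex c -> 0 <= a <= 1 -> 0 <= x <= 1 -> x < a ->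
  x - a <= h < 0 -> c (h + a) - c a <= h / (x - a) * (c x - c a).
Proof.
move=> cv ha hx ax /andP[hxa h0].
have xa0 : x - a < 0 by rewrite subr_lt0.
have [->|hne] := eqVneq h (x - a).
  by rewrite divff ?lt_eqF // mul1r subrK.
have l01 : 0 < h / (x - a) < 1.
  apply/andP; split; first by rewrite ltr_ndivlMr // mul0r.
  by rewrite ltr_ndivrMr // mul1r lt_neqAle eq_sym hne hxa.
have := cv x a _ hx ha (negbT (lt_eqF ax)) l01.
have -> : h / (x - a) * x + (1 - h / (x - a)) * a = h + a.
  by field; rewrite lt_eqF.
move=> /ltW H; move: H; set l := h / (x - a); lra.
Qed.


Lemma tangent c a x : sconvex c -> 0 < a < 1 -> 0 <= x <= 1 -> derivable c a 1 ->
  c a + derive1 c a * (x - a) <= c x.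
Proof.
move=> cv ha hx dc.
have ha' : 0 <= a <= 1 by case/andP: ha => *; apply/andP; split; apply: ltW.
pose q := fun h : R => h^-1 * (c (h + a) - c a).
have cq : cvg (q @ 0^').
  have -> : q = (fun h => h^-1 *: ((c \o shift a) (h *: 1) - c a)).
    by apply/funext => h; rewrite /q /= [_%:A]mulr1.
  exact: dc.
have dE : derive1 c a = lim (q @ 0^') by [].
have [->|xna] := eqVneq x a; first by rewrite subrr mulr0 addr0.
have [ax|xa] := ltP a x.
  have xa0 : 0 < x - a by rewrite subr_gt0.
  suff : derive1 c a <= (c x - c a) / (x - a).
    by rewrite ler_pdivlMr // => H; lra.
  rewrite dE (cvg_at_rightE q) //.
  apply: (@limr_le _ _ _ R).
    apply/cvg_ex; exists (lim (q @ 0^')); apply: cvg_trans cq; apply: cvg_app.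
    move=> A [e egt0 Ae]; exists e => // y ye ygt0; apply: Ae => //.
    exact/lt0r_neq0.
  near=> h.
  have hpos : 0 < h by near: h; exists 1 => /=.
  have hle : h <= x - a.
    near: h; exists (x - a) => //= y; rewrite /= distrC subr0 => + ypos.
    by move=> /(le_lt_trans (ler_norm _)) /ltW.
  have := @chord_le c a x h cv ha' hx ax.
  rewrite hpos hle => /(_ isT) H.
  rewrite /q mulrC ler_pdivrMr //; apply: (le_trans H).
  rewrite le_eqVlt; apply/orP; left; apply/eqP; field.
  by rewrite gt_eqF.
have ax : x < a by rewrite lt_neqAle xna xa.
have xa0 : x - a < 0 by rewrite subr_lt0.
suff : (c x - c a) / (x - a) <= derive1 c a.
  by rewrite ler_ndivrMr // => H; lra.
rewrite dE (cvg_at_leftE q) //.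
apply: limr_ge.
  apply/cvg_ex; exists (lim (q @ 0^')); apply: cvg_trans cq; apply: cvg_app.
  move=> A [e egt0 Ae]; exists e => // y ye ygt0; apply: Ae => //.
  exact/ltr0_neq0.
near=> h.
have hneg : h < 0 by near: h; exists 1 => /=.
have hle : x - a <= h.
  near: h; exists (a - x); first by rewrite /= subr_gt0.
  move=> y; rewrite /= distrC subr0 => + yneg.
  by move=> /ltr_normlP [H _]; lra.
have := @chord_ge c a x h cv ha' hx ax.
rewrite hneg hle => /(_ isT) H.
rewrite /q [h^-1 * _]mulrC ler_ndivlMr //; apply: (le_trans H).
rewrite le_eqVlt; apply/orP; left; apply/eqP; field.
by rewrite lt_eqF.
Unshelve. all: by end_near.
Qed.


Lemma fermat_c c k s a b x0 : a < x0 < b ->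
  (forall t, a < t < b -> derivable c t 1) ->
  (forall t, a < t < b -> k * c x0 + s * x0 <= k * c t + s * t) ->
  k * derive1 c x0 + s = 0.
Proof.
move=> hx dc hmin.
pose g := (k \*: c + s \*: id)%R.
have hab : a <= b by case/andP: hx => h1 h2; exact: ltW (lt_trans h1 h2).
have dg : forall t, t \in `]a, b[ -> derivable g t 1.
  move=> t; rewrite in_itv /= => /dc dct.
  have Dc := derivableP dct.
  apply: ex_derive.
have := @derive1_at_min R g a b x0 hab dg.
have x0in : x0 \in `]a, b[ by rewrite in_itv /=.
move=> /(_ x0in) H.
have {H} : is_derive x0 1 g 0.
  apply: H => t; rewrite in_itv /= => /hmin; done.
move=> H0d; have H0 : 'D_1 g x0 = 0 := @derive_val _ _ _ _ _ _ _ H0d.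
have dcx := derivableP (dc _ hx).
have : is_derive x0 1 g (k *: 'D_1 c x0 + s *: 1).
  apply: is_deriveD; apply: is_deriveZ.
move=> H1d; have := @derive_val _ _ _ _ _ _ _ H1d; rewrite H0 => ->.
by rewrite derive1E /= [s%:A]mulr1.
Qed.


Lemma unit_itvE : @unit_itv R = [set` `]0, 1[%R] `|` ([set 0] `|` [set 1]).
Proof.
apply/seteqP; split => x /=.
  rewrite /unit_itv /= in_itv /= => /andP[x0 x1].
  have [->|xn0] := eqVneq x 0; first by right; left.
  have [->|xn1] := eqVneq x 1; first by right; right.
  by left; rewrite lt_neqAle eq_sym xn0 x0 lt_neqAle xn1 x1.
rewrite in_itv /= /unit_itv /=; case=> [/andP[x0 x1]|[->|->]]; rewrite ?lexx ?ler01 //.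
by rewrite !ltW.
Qed.

Lemma meas_c c : (forall x, 0 < x < 1 -> derivable c x 1) -> measurable_fun (@unit_itv R) c.
Proof.
move=> dc; rewrite unit_itvE.
apply/measurable_funU => //.
  by apply: measurableU.
split.
  apply: open_continuous_measurable_fun; first exact: interval_open.
  move=> x; rewrite inE /= in_itv /= => /dc /derivable1_diffP.
  exact: differentiable_continuous.
apply/measurable_funU => //; split; exact: measurable_fun_set1.
Qed.

End helpers.

Lemma meas_unit (R : realType) : measurable (@unit_itv R).
Proof. by rewrite unit_itvE; apply: measurableU => //; apply: measurableU. Qed.

Section twopt.
Context (R : realType) (p : {i01 R}) (y z : R).

Definition twopt := measure_add (mscale (p%:num)%:nng (\d_y : {measure set R -> \bar R}))
   (mscale (1 - p%:num)%:nng (\d_z : {measure set R -> \bar R})).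

HB.instance Definition _ := Measure.on twopt.

Let twopt_setT : twopt [set: R] = 1%E.
Proof.
have -> : twopt [set: R] = ((p%:num)%:E * \d_y [set: R] + (1 - p%:num)%:E * \d_z [set: R])%E by rewrite /twopt measure_addE.
rewrite !diracT !mule1 -EFinD.
by rewrite addrC subrK.
Qed.

HB.instance Definition _ := @Measure_isProbability.Build _ _ R twopt twopt_setT.

Lemma integral_twopt (D : set R) (f : R -> \bar R) : measurable D ->
  measurable_fun D f -> (forall x, D x -> (0 <= f x)%E) -> D y -> D z ->
  (\int[twopt]_(x in D) f x = (p%:num)%:E * f y + (1 - p%:num)%:E * f z)%E.
Proof.
move=> mD mf f0 Dy Dz.
rewrite /twopt ge0_integral_measure_add // !ge0_integral_mscale //.
by rewrite !integral_dirac // !diracE !mem_set // !mul1e.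
Qed.

End twopt.


Section integ.
Context (R : realType).
Local Notation D := (@unit_itv R).

Lemma integ_bnd (G : probability R R) (f : R -> R) M :
  measurable_fun D f -> (forall x, D x -> `|f x| <= M) -> G.-integrable D (EFin \o f).
Proof.
move=> mf fb; apply: measurable_bounded_integrable => //.
- exact: meas_unit.
- by rewrite (le_lt_trans (probability_le1 _ (meas_unit R))) // ltry.
- exists M; split; first exact: num_real.
  move=> x Mx z Dz /=; apply: le_trans (fb _ Dz) _; exact: ltW.
Qed.


Lemma dev_bound (G : probability R R) (f c : R -> R) kappa v0 m mu Mf Mc :
  bayes_plausible G mu -> measurable_fun D f -> measurable_fun D c ->
  (forall x, D x -> `|f x| <= Mf) -> (forall x, D x -> `|c x| <= Mc) ->
  (forall x, D x -> f x <= v0 - kappa * m * (x - mu) + kappa * c x) ->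
  (\int[G]_(x in D) (f x)%:E - kappa%:E * \int[G]_(x in D) (c x)%:E <= v0%:E)%E.
Proof.
move=> [GD Gmean] mf mc fb cb fle.
have mD := meas_unit R.
have If := @integ_bnd G f Mf mf fb.
have Ic := @integ_bnd G c Mc mc cb.
have mid : measurable_fun D (fun x : R => x) by exact: measurable_id.
have Ix : G.-integrable D (EFin \o (fun x : R => x)).
  apply: (@integ_bnd G _ 1 mid) => x /andP[x0 x1].
  by rewrite ger0_norm.
have Icst : G.-integrable D (EFin \o (fun _ : R => v0 + kappa * m * mu)).
  apply: (@integ_bnd G _ `|v0 + kappa * m * mu|) => //.
have ICf := integrable_fin_num mD Ic; set IC := (\int[G]_(x in D) (c x)%:E)%E in ICf *.
have IFf := integrable_fin_num mD If; set IF := (\int[G]_(x in D) (f x)%:E)%E in IFf *.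
have : (IF <= \int[G]_(x in D) (((v0 + kappa * m * mu)%:E + (- (kappa * m))%:E * x%:E) + kappa%:E * (c x)%:E))%E.
  apply: le_integral => //.
  - apply: integrableD => //.
      apply: integrableD => //.
      exact: integrableZl.
    exact: integrableZl.
  - move=> x; rewrite inE => Dx; rewrite -!EFinM -!EFinD lee_fin.
    apply: le_trans (fle x Dx) _; rewrite le_eqVlt; apply/orP; left; apply/eqP; ring.
rewrite integralD //; last 2 first.
- by apply: integrableD => //; exact: integrableZl.
- exact: integrableZl.
rewrite integralD //; last exact: integrableZl.
rewrite integralZl // integralZl // Gmean -/IC.
rewrite (_ : (\int[G]_(_ in D) (v0 + kappa * m * mu)%:E)%E = ((v0 + kappa * m * mu)%:E * G D)%E); last by rewrite -integral_cst.
rewrite GD mule1.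
move: ICf IFf; rewrite !fin_numE => /andP[/negP ICn /negP ICp] /andP[/negP IFn /negP IFp].
move: IC IF ICn ICp IFn IFp => [IC| |] [IF| |] // _ _ _ _ H.
move: H; rewrite -!EFinM -!EFinD !lee_fin => H.
nra.
Qed.


Definition payoff (v0 xL xH : R) (t : R -> state -> R) (pW pL pH : R -> R) (x : R) :=
  pW x * v0 + pL x * exp_transfer t xL x + pH x * exp_transfer t xH x.

Lemma meas_payoff v0 xL xH t pW pL pH : strategy pW pL pH ->
  measurable_fun D (payoff v0 xL xH t pW pL pH).
Proof.
move=> [mW [mL [mH _]]].
have me : forall d, measurable_fun D (fun x => exp_transfer t d x).
  move=> d; rewrite /exp_transfer.
  apply: measurable_funD; apply: measurable_funM => //.
  by apply: measurable_funB => //.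
rewrite /payoff.
apply: measurable_funD; first apply: measurable_funD.
- by apply: measurable_funM.
- by apply: measurable_funM => //; exact: me.
- by apply: measurable_funM => //; exact: me.
Qed.

Lemma payoff_bnd v0 xL xH t pW pL pH x : strategy pW pL pH -> 0 <= v0 ->
  (forall d s, (d = xL \/ d = xH) -> 0 <= t d s) -> D x ->
  0 <= payoff v0 xL xH t pW pL pH x <=
  v0 + (t xL th1 + t xL th2) + (t xH th1 + t xH th2).
Proof.
move=> [_ [_ [_ hs]]] v00 tpos Dx.
have [w0 l0 h0 sum1] := hs x Dx.
move: Dx => /andP[x0 x1].
have t1 := tpos xL th1 (or_introl erefl).
have t2 := tpos xL th2 (or_introl erefl).
have t3 := tpos xH th1 (or_intror erefl).
have t4 := tpos xH th2 (or_intror erefl).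
have eb : forall d, 0 <= t d th1 -> 0 <= t d th2 ->
    0 <= exp_transfer t d x <= t d th1 + t d th2.
  move=> d a b; rewrite /exp_transfer; apply/andP; split.
    by apply: addr_ge0; apply: mulr_ge0 => //; lra.
  by nra.
have /andP[e1 e2] := eb _ t1 t2.
have /andP[e3 e4] := eb _ t3 t4.
rewrite /payoff; apply/andP; split.
  by apply: addr_ge0; [apply: addr_ge0|]; apply: mulr_ge0.
have hW : pW x * v0 <= v0 by nra.
have hL : pL x * exp_transfer t xL x <= t xL th1 + t xL th2 by nra.
have hH : pH x * exp_transfer t xH x <= t xH th1 + t xH th2 by nra.
lra.
Qed.


Lemma bp_twopt (p : {i01 R}) y z mu : D y -> D z ->
  p%:num * y + (1 - p%:num) * z = mu -> bayes_plausible (twopt R p y z) mu.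
Proof.
move=> Dy Dz hm; split.
  transitivity ((p%:num)%:E * \d_y D + (1 - p%:num)%:E * \d_z D)%E.
    exact: measure_addE.
  by rewrite !diracE !mem_set // !mule1 -EFinD addrC subrK.
rewrite (@integral_twopt R p y z D (fun x => x%:E)) //.
- by rewrite -!EFinM -EFinD hm.
- exact: meas_unit.
- by apply/measurable_EFinP; exact: measurable_id.
- by move=> x /andP[x0 _]; rewrite lee_fin.
Qed.

Lemma dev_twopt (p : {i01 R}) (y z : R) (c : R -> R) (kappa v0 xL xH : R)
  (t : R -> state -> R) (pW pL pH : R -> R) :
  strategy pW pL pH -> 0 <= v0 -> (forall d s, (d = xL \/ d = xH) -> 0 <= t d s) ->
  measurable_fun D c -> (forall x, D x -> 0 <= c x) -> D y -> D z ->
  dev_payoff c kappa v0 xL xH t (twopt R p y z) pW pL pH =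
  (p%:num * (payoff v0 xL xH t pW pL pH y - kappa * c y) +
   (1 - p%:num) * (payoff v0 xL xH t pW pL pH z - kappa * c z))%:E.
Proof.
move=> st v00 tpos mc c0 Dy Dz.
have mD := meas_unit R.
rewrite /dev_payoff.
have mP : measurable_fun D (fun x => (payoff v0 xL xH t pW pL pH x)%:E).
  by apply/measurable_EFinP; exact: meas_payoff.
have P0 : forall x, D x -> (0 <= (payoff v0 xL xH t pW pL pH x)%:E)%E.
  by move=> x Dx; rewrite lee_fin; case/andP: (@payoff_bnd v0 xL xH t pW pL pH x st v00 tpos Dx).
have mcE : measurable_fun D (fun x => (c x)%:E) by apply/measurable_EFinP.
have c0E : forall x, D x -> (0 <= (c x)%:E)%E by move=> x Dx; rewrite lee_fin; exact: c0.
rewrite (@integral_twopt R p y z D (fun x => (payoff v0 xL xH t pW pL pH x)%:E)) //.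
rewrite (@integral_twopt R p y z D (fun x => (c x)%:E)) //.
rewrite -!EFinM -!EFinD -?EFinM -?EFinB; congr (_%:E); ring.
Qed.


Definition lo (mu : R) : R -> R := \1_[set` `]-oo, mu[%R].
Definition hi (mu : R) : R -> R := \1_[set` `[mu, +oo[%R].

Lemma lo_lt mu x : x < mu -> lo mu x = 1 /\ hi mu x = 0.
Proof.
move=> xm; rewrite /lo /hi !indicE.
have -> : (x \in [set` `]-oo, mu[%R]) = true by apply/mem_set; rewrite /= in_itv /= xm.
have -> : (x \in [set` `[mu, +oo[%R]) = false.
  by apply/negbTE/negP; rewrite inE /= in_itv /= andbT leNgt xm.
by [].
Qed.

Lemma lo_ge mu x : mu <= x -> lo mu x = 0 /\ hi mu x = 1.
Proof.
move=> xm; rewrite /lo /hi !indicE.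
have -> : (x \in [set` `[mu, +oo[%R]) = true by apply/mem_set; rewrite /= in_itv /= xm.
have -> : (x \in [set` `]-oo, mu[%R]) = false.
  by apply/negbTE/negP; rewrite inE /= in_itv /= ltNge xm.
by [].
Qed.

Lemma lo_hi mu x : [/\ 0 <= lo mu x, 0 <= hi mu x & lo mu x + hi mu x = 1].
Proof.
have [xm|xm] := ltP x mu.
  by have [-> ->] := @lo_lt mu x xm; rewrite ler01 lexx addr0.
by have [-> ->] := @lo_ge mu x xm; rewrite ler01 lexx add0r.
Qed.

Lemma meas_lo mu : measurable_fun D (lo mu).
Proof. exact: measurable_indic. Qed.
Lemma meas_hi mu : measurable_fun D (hi mu).
Proof. exact: measurable_indic. Qed.

Lemma strat1 mu : strategy (lo mu) (cst 0) (hi mu).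
Proof.
split; first exact: meas_lo. split => //. split; first exact: meas_hi.
move=> x _; have [? ? ?] := lo_hi mu x; split; rewrite /cst /= ?lexx //; lra.
Qed.

Lemma strat2 mu : strategy (cst 0) (lo mu) (hi mu).
Proof.
split => //. split; first exact: meas_lo. split; first exact: meas_hi.
move=> x _; have [? ? ?] := lo_hi mu x; split; rewrite /cst /= ?lexx //; lra.
Qed.

Lemma strat3 mu : strategy (hi mu) (lo mu) (cst 0).
Proof.
split; first exact: meas_hi. split; first exact: meas_lo. split => //.
move=> x _; have [? ? ?] := lo_hi mu x; split; rewrite /cst /= ?lexx //; lra.
Qed.

End integ.

Section suff.
Context (R : realType).
Local Notation D := (@unit_itv R).

Lemma c_bnd (c : R -> R) B : (forall x, 0 <= x <= 1 -> 0 <= c x) ->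
  (forall x, 0 < x < 1 -> c x <= B) -> forall x, D x -> `|c x| <= `|B| + c 0 + c 1.
Proof.
move=> c0 hB x Dx; have cx0 := c0 x Dx.
have c00 := c0 0 (_ : 0 <= 0 <= 1); have c10 := c0 1 (_ : 0 <= 1 <= 1).
rewrite ?lexx ?ler01 in c00 c10; have {c00} c00 := c00 isT; have {c10} c10 := c10 isT.
rewrite ger0_norm //.
have nB := ler_norm B; have nB0 := normr_ge0 B.
have [->|x0] := eqVneq x 0; first by lra.
have [->|x1] := eqVneq x 1; first by lra.
move: Dx => /andP[x0' x1'].
have : 0 < x < 1 by rewrite !lt_neqAle eq_sym x0 x0' x1 x1'.
move=> /hB; lra.
Qed.

Lemma suff_dir (c : R -> R) kappa v0 mu xL xH :
  0 < kappa -> 0 <= v0 -> 0 < mu < 1 ->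
  cost_assumptions c mu ->
  0 < xL -> xL < mu -> mu < xH -> xH < 1 ->
  eta_max c mu xL xH <= v0 / kappa -> implements_efficiently c kappa v0 xL xH mu.
Proof.
move=> k0 v00 /andP[mu0 mu1] [c0 [cv [dc [[B hB] cmu]]]] xL0 xLmu muxH xH1 heta.
have dcx : forall x, 0 < x < 1 -> derivable c x 1 by move=> x /dc [].
have xLxH : xL < xH by exact: lt_trans xLmu muxH.
have xL1 : xL < 1 by exact: lt_trans xLxH xH1.
have xH0 : 0 < xH by exact: lt_trans xL0 xLxH.
have DxL : D xL by rewrite /unit_itv /= !ltW.
have DxH : D xH by rewrite /unit_itv /= !ltW.
have iL : 0 < xL < 1 by rewrite xL0 xL1.
have iH : 0 < xH < 1 by rewrite xH0 xH1.
have imu : 0 < mu < 1 by rewrite mu0 mu1.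
move: heta; rewrite ge_max => /andP[e1 e2].
rewrite ler_pdivlMr // in e1; rewrite ler_pdivlMr // in e2.
move: e1 e2; rewrite /eta1 /eta2.
set m := derive1 c mu; set a := derive1 c xL; set b := derive1 c xH => e1 e2.
have T1 := @tangent R c xL xH cv iL DxH (dcx _ iL); rewrite -/a in T1.
have T2 := @tangent R c xH xL cv iH DxL (dcx _ iH); rewrite -/b in T2.
have Tm : forall x, D x -> c mu + m * (x - mu) <= c x.
  by move=> x Dx; exact: (@tangent R c mu x cv imu Dx (dcx _ imu)).
have Ta : forall x, D x -> c xL + a * (x - xL) <= c x.
  by move=> x Dx; exact: (@tangent R c xL x cv iL Dx (dcx _ iL)).
have Tb : forall x, D x -> c xH + b * (x - xH) <= c x.
  by move=> x Dx; exact: (@tangent R c xH x cv iH Dx (dcx _ iH)).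
have ba : a <= b by nra.
have hab1 : 0 <= xL * (b - a) by apply: mulr_ge0; [exact: ltW|lra].
have hab2 : 0 <= (1 - xH) * (b - a) by apply: mulr_ge0; lra.
pose AL x := v0 - kappa * m * (x - mu) + kappa * (c xL + a * (x - xL)).
pose AH x := v0 - kappa * m * (x - mu) + kappa * (c xH + b * (x - xH)).
pose t := fun (d : R) (s : state) => if d == xL then (if s is th1 then AL 0 else AL 1)
                         else (if s is th1 then AH 0 else AH 1).
have xHL : (xH == xL) = false by rewrite gt_eqF.
have etL : forall x, exp_transfer t xL x = AL x.
  by move=> x; rewrite /exp_transfer /t eqxx /AL; ring.
have etH : forall x, exp_transfer t xH x = AH x.
  by move=> x; rewrite /exp_transfer /t xHL /AH; ring.
have AL1 : 0 <= AL 1.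
  have -> : AL 1 = v0 - kappa * ((1 - mu) * m - c xL - (1 - xL) * a) by rewrite /AL; ring.
  lra.
have AL0 : 0 <= AL 0.
  have -> : AL 0 = v0 - kappa * (- mu * m - c xL + a * xL) by rewrite /AL; ring.
  have : kappa * (- mu * m - c xL + a * xL) <= kappa * (- mu * m - c xH + b * xH).
    by apply: ler_wpM2l; [exact: ltW| nra].
  lra.
have AH0 : 0 <= AH 0.
  have -> : AH 0 = v0 - kappa * (- mu * m - c xH + b * xH) by rewrite /AH; ring.
  lra.
have AH1 : 0 <= AH 1.
  have -> : AH 1 = v0 - kappa * ((1 - mu) * m - c xH - (1 - xH) * b) by rewrite /AH; ring.
  have : kappa * ((1 - mu) * m - c xH - (1 - xH) * b) <= kappa * ((1 - mu) * m - c xL - (1 - xL) * a).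
    by apply: ler_wpM2l; [exact: ltW| nra].
  lra.
have tpos : forall d s, (d = xL \/ d = xH) -> 0 <= t d s.
  by move=> d s [->|->]; case: s; rewrite /t ?eqxx ?xHL.
have dxx : xH - xL != 0 by rewrite subr_eq0 gt_eqF.
have Htr : truthful_payoff c kappa xL xH mu t = v0.
  rewrite /truthful_payoff !etL !etH /AL /AH /wL /wH; field.
  exact: dxx.
exists t; split; last first.
  rewrite /principal_cost /first_best !etL !etH /AL /AH /wL /wH; field.
  exact: dxx.
split => //; split; first by rewrite Htr.
move=> G pW pL pH bp st.
rewrite Htr /dev_payoff.
have [_ [_ [_ hs]]] := st.
apply: (@dev_bound R G (@payoff R v0 xL xH t pW pL pH) c kappa v0 m mu
   (v0 + (t xL th1 + t xL th2) + (t xH th1 + t xH th2)) (`|B| + c 0 + c 1) bp).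
- exact: meas_payoff.
- apply: meas_c => x hx; exact: dcx.
- move=> x Dx; have /andP[p0 p1] := @payoff_bnd R v0 xL xH t pW pL pH x st v00 tpos Dx.
  by rewrite ger0_norm.
- exact: c_bnd.
move=> x Dx.
have [w0 l0 h0 sum1] := hs x Dx.
set L := v0 - kappa * m * (x - mu) + kappa * c x.
have h1 : v0 <= L.
  have := Tm x Dx; rewrite cmu add0r => H.
  have : kappa * (m * (x - mu)) <= kappa * c x by apply: ler_wpM2l => //; exact: ltW.
  rewrite /L; lra.
have h2 : AL x <= L.
  have : kappa * (c xL + a * (x - xL)) <= kappa * c x by apply: ler_wpM2l; [exact: ltW|exact: Ta].
  rewrite /L /AL; lra.
have h3 : AH x <= L.
  have : kappa * (c xH + b * (x - xH)) <= kappa * c x by apply: ler_wpM2l; [exact: ltW|exact: Tb].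
  rewrite /L /AH; lra.
rewrite /payoff etL etH.
have : pW x * v0 <= pW x * L by exact: ler_wpM2l.
have : pL x * AL x <= pL x * L by exact: ler_wpM2l.
have : pH x * AH x <= pH x * L by exact: ler_wpM2l.
have : pW x * L + pL x * L + pH x * L = L by rewrite -!mulrDl sum1 mul1r.
lra.
Qed.

End suff.

Section nec.
Context (R : realType).
Local Notation D := (@unit_itv R).

Lemma alg_A (y z mu v0 s a b : R) : y < mu -> mu < z ->
  (z - mu) / (z - y) * a + (1 - (z - mu) / (z - y)) * b <= v0 ->
  b = v0 + s * (z - mu) -> a <= v0 + s * (y - mu).
Proof.
move=> ym mz H hb.
have zy : 0 < z - y by lra.
have E : (z - mu) / (z - y) * a + (1 - (z - mu) / (z - y)) * b =
         ((z - mu) * a + (mu - y) * b) / (z - y) by field; rewrite gt_eqF.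
rewrite E ler_pdivrMr // hb in H.
have : (z - mu) * (a - (v0 + s * (y - mu))) <= 0 by lra.
rewrite pmulr_rle0; [lra | lra].
Qed.

Lemma alg_B (y z mu v0 s a b : R) : y < mu -> mu < z ->
  (z - mu) / (z - y) * a + (1 - (z - mu) / (z - y)) * b <= v0 ->
  a = v0 + s * (y - mu) -> b <= v0 + s * (z - mu).
Proof.
move=> ym mz H ha.
have zy : 0 < z - y by lra.
have E : (z - mu) / (z - y) * a + (1 - (z - mu) / (z - y)) * b =
         ((z - mu) * a + (mu - y) * b) / (z - y) by field; rewrite gt_eqF.
rewrite E ler_pdivrMr // ha in H.
have : (mu - y) * (b - (v0 + s * (z - mu))) <= 0 by lra.
rewrite pmulr_rle0; [lra | lra].
Qed.


Lemma nec_dir (c : R -> R) kappa v0 mu xL xH :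
  0 < kappa -> 0 <= v0 -> 0 < mu < 1 ->
  cost_assumptions c mu ->
  0 < xL -> xL < mu -> mu < xH -> xH < 1 ->
  implements_efficiently c kappa v0 xL xH mu -> eta_max c mu xL xH <= v0 / kappa.
Proof.
move=> k0 v00 /andP[mu0 mu1] [c0 [cv [dc [[B hB] cmu]]]] xL0 xLmu muxH xH1.
move=> [t [[tpos [_ hdev]] hcost]].
have dcx : forall x, 0 < x < 1 -> derivable c x 1 by move=> x /dc [].
have xLxH : xL < xH by exact: lt_trans xLmu muxH.
have xL1 : xL < 1 by exact: lt_trans xLxH xH1.
have xH0 : 0 < xH by exact: lt_trans xL0 xLxH.
have DxL : D xL by rewrite /unit_itv /= !ltW.
have DxH : D xH by rewrite /unit_itv /= !ltW.
have mc := @meas_c R c dcx.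
have dxx : xH - xL != 0 by rewrite subr_eq0 gt_eqF.
have Htr : truthful_payoff c kappa xL xH mu t = v0.
  by move: hcost; rewrite /truthful_payoff /principal_cost /first_best => h; lra.
pose PL := exp_transfer t xL xL - kappa * c xL.
pose PH := exp_transfer t xH xH - kappa * c xH.
pose s := (PH - PL) / (xH - xL).
have e0 : wL xL xH mu * PL + wH xL xH mu * PH = v0 by [].
rewrite /wL /wH in e0.
have key : v0 = ((xH - mu) * PL + (mu - xL) * PH) / (xH - xL).
  by rewrite -e0; field.
have hPL : PL = v0 + s * (xL - mu) by rewrite key /s; field.
have hPH : PH = v0 + s * (xH - mu) by rewrite key /s; field.
have famA : forall y pW pL pH, 0 <= y -> y < mu -> strategy pW pL pH ->
    @payoff R v0 xL xH t pW pL pH xH = exp_transfer t xH xH ->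
    @payoff R v0 xL xH t pW pL pH y - kappa * c y <= v0 + s * (y - mu).
  move=> y pW pL pH y0 ym st PxH.
  have Dy : D y by rewrite /unit_itv /= y0 ltW // (lt_trans ym mu1).
  have yxH : 0 < xH - y by rewrite subr_gt0 (lt_trans ym muxH).
  have q0 : 0 <= (xH - mu) / (xH - y) by apply: divr_ge0; lra.
  have q1 : (xH - mu) / (xH - y) <= 1 by rewrite ler_pdivrMr // mul1r; lra.
  pose p : {i01 R} := Itv01 q0 q1.
  have bp : bayes_plausible (twopt R p y xH) mu.
    by apply: bp_twopt => //=; field; rewrite gt_eqF.
  have := hdev (twopt R p y xH) pW pL pH bp st.
  rewrite (@dev_twopt R p y xH c kappa v0 xL xH t pW pL pH st v00 tpos mc c0 Dy DxH).
  rewrite Htr lee_fin PxH /= => H.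
  exact: (alg_A _ _ _ _ _ _ _ ym muxH H hPH).
have famB : forall z pW pL pH, mu < z -> z <= 1 -> strategy pW pL pH ->
    @payoff R v0 xL xH t pW pL pH xL = exp_transfer t xL xL ->
    @payoff R v0 xL xH t pW pL pH z - kappa * c z <= v0 + s * (z - mu).
  move=> z pW pL pH mz z1 st PxL.
  have Dz : D z by rewrite /unit_itv /= z1 ltW // (lt_trans mu0 mz).
  have zxL : 0 < z - xL by rewrite subr_gt0 (lt_trans xLmu mz).
  have q0 : 0 <= (z - mu) / (z - xL) by apply: divr_ge0; lra.
  have q1 : (z - mu) / (z - xL) <= 1 by rewrite ler_pdivrMr // mul1r; lra.
  pose p : {i01 R} := Itv01 q0 q1.
  have bp : bayes_plausible (twopt R p xL z) mu.
    by apply: bp_twopt => //=; field; rewrite gt_eqF.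
  have := hdev (twopt R p xL z) pW pL pH bp st.
  rewrite (@dev_twopt R p xL z c kappa v0 xL xH t pW pL pH st v00 tpos mc c0 DxL Dz).
  rewrite Htr lee_fin PxL /= => H.
  exact: (alg_B _ _ _ _ _ _ _ xLmu mz H hPL).
have Fa : kappa * derive1 c mu + s = 0.
  apply: (@fermat_c R c kappa s 0 1 mu); first by rewrite mu0 mu1.
    exact: dcx.
  move=> y /andP[y0 y1]; rewrite cmu mulr0 add0r.
  have [ym|my] := ltP y mu.
    have hx : @payoff R v0 xL xH t (lo R mu) (cst 0) (hi R mu) xH = exp_transfer t xH xH.
      by rewrite /payoff; have [-> ->] := @lo_ge R mu xH (ltW muxH); rewrite /cst; ring.
    have := famA y _ _ _ (ltW y0) ym (strat1 R mu) hx.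
    rewrite /payoff; have [-> ->] := @lo_lt R mu y ym; rewrite /cst => H.
    lra.
  have [emy|nmy] := eqVneq mu y; first by rewrite -emy cmu; lra.
  have muy : mu < y by rewrite lt_neqAle nmy my.
  have hx : @payoff R v0 xL xH t (hi R mu) (lo R mu) (cst 0) xL = exp_transfer t xL xL.
    by rewrite /payoff; have [-> ->] := @lo_lt R mu xL xLmu; rewrite /cst; ring.
  have := famB y _ _ _ muy (ltW y1) (strat3 R mu) hx.
  rewrite /payoff; have [-> ->] := @lo_ge R mu y my; rewrite /cst => H.
  lra.
pose aL := t xL th2 - t xL th1.
have Fb : kappa * derive1 c xL + (s - aL) = 0.
  apply: (@fermat_c R c kappa (s - aL) 0 mu xL); first by rewrite xL0 xLmu.
    by move=> y /andP[y0 y1]; apply: dcx; rewrite y0 (lt_trans y1 mu1).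
  move=> y /andP[y0 ym].
  have hx : @payoff R v0 xL xH t (cst 0) (lo R mu) (hi R mu) xH = exp_transfer t xH xH.
    by rewrite /payoff; have [-> ->] := @lo_ge R mu xH (ltW muxH); rewrite /cst; ring.
  have := famA y _ _ _ (ltW y0) ym (strat2 R mu) hx.
  rewrite /payoff; have [-> ->] := @lo_lt R mu y ym; rewrite /cst /exp_transfer => H.
  have := hPL; rewrite /PL /exp_transfer => H2.
  rewrite /aL; lra.
pose aH := t xH th2 - t xH th1.
have Fc : kappa * derive1 c xH + (s - aH) = 0.
  apply: (@fermat_c R c kappa (s - aH) mu 1 xH); first by rewrite muxH xH1.
    by move=> y /andP[y0 y1]; apply: dcx; rewrite y1 (lt_trans mu0 y0).
  move=> y /andP[my y1].
  have hx : @payoff R v0 xL xH t (cst 0) (lo R mu) (hi R mu) xL = exp_transfer t xL xL.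
    by rewrite /payoff; have [-> ->] := @lo_lt R mu xL xLmu; rewrite /cst; ring.
  have := famB y _ _ _ my (ltW y1) (strat2 R mu) hx.
  rewrite /payoff; have [-> ->] := @lo_ge R mu y (ltW my); rewrite /cst /exp_transfer => H.
  have := hPH; rewrite /PH /exp_transfer => H2.
  rewrite /aH; lra.
have km : kappa * derive1 c mu = - s by lra.
have ka : kappa * derive1 c xL = aL - s by lra.
have kb : kappa * derive1 c xH = aH - s by lra.
rewrite /eta_max ge_max; apply/andP; split; rewrite ler_pdivlMr //.
- rewrite /eta1.
  have -> : (- mu * derive1 c mu - c xH + derive1 c xH * xH) * kappa =
    - mu * (kappa * derive1 c mu) - kappa * c xH + xH * (kappa * derive1 c xH) by ring.
  rewrite km kb.
  have := hPH; rewrite /PH /exp_transfer => H2.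
  have := tpos xH th1 (or_intror erefl).
  rewrite /aH; lra.
- rewrite /eta2.
  have -> : ((1 - mu) * derive1 c mu - c xL - (1 - xL) * derive1 c xL) * kappa =
    (1 - mu) * (kappa * derive1 c mu) - kappa * c xL - (1 - xL) * (kappa * derive1 c xL) by ring.
  rewrite km ka.
  have := hPL; rewrite /PL /exp_transfer => H2.
  have := tpos xL th2 (or_introl erefl).
  rewrite /aL; lra.
Qed.

End nec.

Theorem proposition4 (R : realType) (c : R -> R) (kappa v0 mu xL xH : R) :
  0 < kappa -> 0 <= v0 -> 0 < mu < 1 ->
  cost_assumptions c mu ->
  0 < xL -> xL < mu -> mu < xH -> xH < 1 ->
  implements_efficiently c kappa v0 xL xH mu <-> eta_max c mu xL xH <= v0 / kappa.
Proof.
move=> k0 v00 mu01 ca xL0 xLmu muxH xH1; split.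
  exact: nec_dir.
exact: suff_dir.
Qed.
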